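(* Let $M\in\{2,3,\dots\}$, let $\mathcal{G}$ be the chain (vertex set $\mathbb{Z}$, $x\sim y$ iff $|x-y|=1$), and let $N=kM$ with $k\in\{2,3,\dots\}$. For $j\in\{1,\dots,M\}$ define $\mathfrak{m}_j:\mathbb{Z}\to\{0,\dots,M\}$ by $\mathfrak{m}_j(0)=j$, $\mathfrak{m}_j(x)=M$ for $x\in\{1,\dots,k-1\}$, $\mathfrak{m}_j(k)=M-j$, and $\mathfrak{m}_j(x)=0$ otherwise. Then the minimizers of $V_N$ over $\mathfrak{M}_N$ are, up to translations in $\mathbb{Z}$, exactly the configurations $\mathfrak{m}_1,\dots,\mathfrak{m}_M$, and $V_N(\mathfrak{m}_j)=M^2$ for every $j\in\{1,\dots,M\}$.
   Context: $\mathfrak{M}_N$ is the set of finitely supported functions $\mathfrak{m}:\mathbb{Z}\to\{0,1,\dots,M\}$ with $\sum_x\mathfrak{m}(x)=N$. The potential is $V_N(\mathfrak{m})=\sum_{x\in\mathbb{Z}}\big(\frac{M}{2}(\mathfrak{m}(x)+\mathfrak{m}(x+1))-\mathfrak{m}(x)\mathfrak{m}(x+1)\big)$. A translation of $\mathfrak{m}$ is $x\mapsto\mathfrak{m}(x-t)$ for some $t\in\mathbb{Z}$. *)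

(* Defs.v *)
From mathcomp Require Import all_boot all_order all_algebra.
From Stdlib Require Import ClassicalEpsilon.
Set Implicit Arguments. Unset Strict Implicit. Unset Printing Implicit Defensive.
Import Order.TTheory GRing.Theory Num.Theory.
Local Open Scope ring_scope.

Definition vanishes_outside (f : int -> rat) (n : nat) : Prop :=
  forall x : int, (n < `|x|)%N -> f x = 0.

(* Sum over Z of a finitely supported function: sum over a window [-n, n]
   outside of which f vanishes (n chosen by Hilbert's epsilon; the value does
   not depend on the choice of such a window). *)
Definition zsum (f : int -> rat) : rat :=
  let n := epsilon (inhabits 0%N) (vanishes_outside f) in
  \sum_(i < (n.*2).+1) f (i%:Z - n%:Z).

Definition inMN (M N : nat) (m : int -> nat) : Prop :=
  (exists n : nat, forall x : int, (n < `|x|)%N -> m x = 0%N) /\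
  (forall x : int, (m x <= M)%N) /\
  zsum (fun x => (m x)%:R) = N%:R.

Definition VN (M : nat) (m : int -> nat) : rat :=
  zsum (fun x => (M%:R / 2) * ((m x)%:R + (m (x + 1))%:R)
                 - (m x)%:R * (m (x + 1))%:R).

Definition isMinimizer (M N : nat) (m : int -> nat) : Prop :=
  inMN M N m /\ forall m' : int -> nat, inMN M N m' -> VN M m <= VN M m'.

Definition translate (m : int -> nat) (t : int) : int -> nat := fun x => m (x - t).

Definition mconf (M k j : nat) (x : int) : nat :=
  if x == 0 then j
  else if (0 < x) && (x < k%:Z) then M
  else if x == k%:Z then (M - j)%N
  else 0%N.

(* Main.v *)
Require Import Defs.
From mathcomp Require Import all_boot all_order all_algebra.
From mathcomp Require Import zify ring.
From Stdlib Require Import ClassicalEpsilon FunctionalExtensionality.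
Import Order.TTheory GRing.Theory Num.Theory.

Lemma sum_eq_pw (f g : nat -> nat) m n :
  (forall i, (m <= i < n)%N -> f i <= g i) ->
  \sum_(m <= i < n) f i = \sum_(m <= i < n) g i ->
  forall i, (m <= i < n)%N -> f i = g i.
Proof.
move=> hle heq.
have : (\sum_(m <= i < n | (m <= i < n)%N) (g i - f i) == 0)%N.
  rewrite sumnB; last by move=> i /hle.
  have E F : \sum_(m <= i < n | (m <= i < n)%N) F i = \sum_(m <= i < n) F i.
    by rewrite [RHS]big_nat_cond; apply: eq_bigl => i; rewrite andbT.
  by rewrite !E heq subnn.
rewrite sum_nat_seq_eq0 => /allP H i hi.
have := H i; rewrite mem_index_iota hi /= => /(_ isT) /eqP.
have := hle i hi. lia.
Qed.

Lemma argmax (s : nat -> nat) L : exists p, (p <= L)%N /\ forall i, (i < L)%N -> s i <= s p.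
Proof.
elim: L => [|L [p [hpL hp]]]; first by exists 0%N.
case: (leqP (s L) (s p)) => h.
  exists p; split; first lia.
  move=> i; rewrite ltnS leq_eqVlt => /orP [/eqP -> //| /hp //].
exists L; split => // i; rewrite ltnS leq_eqVlt => /orP [/eqP -> //| /hp hi].
lia.
Qed.

Lemma seq_main (s : nat -> nat) (L M : nat) :
  (1 <= M)%N -> (forall i, s i <= M) -> s 0%N = 0%N -> (forall i, (L <= i)%N -> s i = 0%N) ->
  (2 * M <= \sum_(i < L) s i)%N ->
  ((\sum_(i < L) s i * s i.+1) + M * M <= M * \sum_(i < L) s i)%N /\
  ((\sum_(i < L) s i * s i.+1) + M * M = M * \sum_(i < L) s i ->
     exists q r : nat, [/\ (0 < q < r)%N, (forall i, (i < q)%N -> s i = 0%N),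
        (forall i, (r < i)%N -> s i = 0%N), (forall i, (q < i < r)%N -> s i = M)
        & (0 < s q)%N && (0 < s r)%N]).
Proof.
move=> hM hle h0 hL.
rewrite -(big_mkord xpredT (fun i => s i)) -(big_mkord xpredT (fun i => s i * s i.+1)) /=.
set N := \sum_(0 <= i < L) s i.
set S := \sum_(0 <= i < L) s i * s i.+1.
move=> hN.
have [p [hpL hp]] := argmax s L.
have hp' : forall i, s i <= s p.
  move=> i; case: (ltnP i L) => hi; [exact: hp | by rewrite hL].
set h := s p.
set A := \sum_(0 <= i < p) s i.
set B := \sum_(p <= i < L) s i.+1.
have eN : N = A + h + B.
  rewrite /N (big_cat_nat _ (n:=p)) //= -addnA; congr (_ + _).
  have -> : \sum_(p <= i < L) s i = \sum_(p <= i < L.+1) s i.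
    by rewrite big_nat_recr //= hL // addn0.
  by rewrite big_ltn ?ltnS // big_add1.
set S1 := \sum_(0 <= i < p) s i * s i.+1.
set S2 := \sum_(p <= i < L) s i * s i.+1.
have eS : S = S1 + S2 by rewrite /S (big_cat_nat _ (n:=p)).
have hS1 : S1 <= A * h.
  rewrite /A big_distrl; apply: leq_sum => i _; rewrite leq_mul2l hp' orbT //.
have hS2 : S2 <= h * B.
  rewrite /B big_distrr; apply: leq_sum => i _; rewrite leq_mul2r hp' orbT //.
have hhM : h <= M by apply: hle.
have hAB : M <= A + B by lia.
have key : h * (A + B) + M * M <= M * N.
  rewrite eN; have -> : M = h + (M - h) by lia.
  set d := M - h.
  have := leq_mul (leqnn d) (_ : h + d <= A + B); rewrite -/d.
  move=> /(_ ltac:(lia)). nia.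
split.
  rewrite eS; lia.
move=> heq.
have hhM' : h = M.
  apply/eqP; rewrite eqn_leq hhM /= leqNgt; apply/negP => hlt.
  have hAB' : M < A + B by lia.
  have : M * M + h * (A + B) < M * N.
    have hd : (0 < M - h)%N by lia.
    have hh : (M - h) * M < (M - h) * (A + B) by rewrite ltn_mul2l hd hAB'.
    rewrite eN; move: hh; have -> : M = h + (M - h) by lia.
    set d := M - h. rewrite -/d. nia.
  rewrite eS in heq. lia.
have eS1 : S1 = A * M by rewrite eS in heq; rewrite hhM' in hS1 hS2 key; nia.
have eS2 : S2 = M * B by rewrite eS in heq; rewrite hhM' in hS1 hS2 key; nia.
have RL : forall i, (i < p)%N -> (0 < s i)%N -> s i.+1 = M.
  move=> i hi hsi.
  have := @sum_eq_pw (fun i => s i * s i.+1) (fun i => s i * M) 0 p.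
  move=> /(_ _ _ i) H.
  have : s i * s i.+1 = s i * M.
    apply: H => //.
    - by move=> j _; rewrite leq_mul2l -hhM' hp' orbT.
    - by rewrite -/S1 eS1 /A big_distrl.
  by move/eqP; rewrite eqn_mul2l (negbTE (lt0n_neq0 hsi)) /= => /eqP.
have RR : forall i, (p <= i)%N -> (0 < s i.+1)%N -> s i = M.
  move=> i hi hsi.
  case: (ltnP i L) => hiL; last by move: hsi; rewrite hL //; lia.
  have := @sum_eq_pw (fun i => s i * s i.+1) (fun i => M * s i.+1) p L.
  move=> /(_ _ _ i) H.
  have : s i * s i.+1 = M * s i.+1.
    apply: H; last by rewrite hi hiL.
    - by move=> j _; rewrite leq_mul2r -hhM' hp' orbT.
    - by rewrite -/S2 eS2 /B big_distrr.
  by move/eqP; rewrite eqn_mul2r (negbTE (lt0n_neq0 hsi)) /= => /eqP.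
have hpos : (0 < s p)%N by rewrite -/h hhM'.
have [q hq qmin] := ex_minnP (ex_intro (fun i => 0 < s i)%N p hpos).
have ubP : forall i, (0 < s i)%N -> (i <= L)%N.
  move=> i; case: (leqP i L) => // /ltnW /hL ->; by [].
have [r hr rmax] := ex_maxnP (ex_intro (fun i => 0 < s i)%N p hpos) ubP.
have hqp : (q <= p)%N := qmin p hpos.
have hpr : (p <= r)%N := rmax p hpos.
have hq0 : (0 < q)%N by case: q hq {qmin hqp} => //; rewrite h0.
have left : forall d, (q + d < p)%N -> s (q + d).+1 = M.
  elim=> [|d IH] hd; first by rewrite addn0 in hd *; apply: RL.
  rewrite addnS; apply: RL; first by lia.
  rewrite IH; lia.
have right : forall d, (p + d.+1 <= r)%N -> s (r - d.+1) = M.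
  elim=> [|d IH] hd.
    apply: RR; first by lia.
    rewrite (_ : (r - 1).+1 = r) //; lia.
  apply: RR; first by lia.
  rewrite (_ : (r - d.+2).+1 = r - d.+1); last by lia.
  rewrite IH; lia.
have mid : forall i, (q < i < r)%N -> s i = M.
  move=> i /andP [h1 h2]; case: (leqP i p) => hip.
    have := left (i - q.+1); rewrite (_ : (q + (i - q.+1)).+1 = i); last by lia.
    apply; lia.
  have := right (r - i.+1); rewrite (_ : r - (r - i.+1).+1 = i); last by lia.
  apply; lia.
have hqr : (q < r)%N.
  case: (ltnP q r) => // hrq.
  have eqp : q = p by lia.
  have erp : r = p by lia.
  have : A + B = 0%N.
    rewrite /A /B big1_seq; last first.
      move=> i; rewrite mem_index_iota /= => hi.
      by case: (posnP (s i)) => // /qmin; lia.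
    rewrite big1_seq // => i; rewrite mem_index_iota /= => hi.
    by case: (posnP (s i.+1)) => // /rmax; lia.
  lia.
exists q, r; split => //; [by rewrite hq0 hqr | | | by rewrite hq hr].
- move=> i hi; case: (posnP (s i)) => // /qmin; lia.
- move=> i hi; case: (posnP (s i)) => // /rmax; lia.
Qed.

Lemma shape_sum (s : nat -> nat) (L M q r : nat) : (q < r)%N ->
  (forall i, (i < q)%N -> s i = 0%N) -> (forall i, (r < i)%N -> s i = 0%N) ->
  (forall i, (q < i < r)%N -> s i = M) -> (r < L)%N ->
  \sum_(i < L) s i = (s q + s r + (r - q.+1) * M)%N.
Proof.
move=> hqr h1 h2 h3 hrL.
rewrite -(big_mkord xpredT) (big_cat_nat _ (n:=q)) //=; last by lia.
rewrite big1_seq ?add0n; last by move=> i; rewrite mem_index_iota /= => hi; apply: h1; lia.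
rewrite (big_cat_nat _ (n:=r.+1)) //=; last by lia.
rewrite [X in (_ + X)%N]big1_seq ?addn0; last first.
  by move=> i; rewrite mem_index_iota /= => hi; apply: h2; lia.
rewrite big_ltn ?ltnS; last by lia.
rewrite big_nat_recr //=.
rewrite (eq_big_nat _ _ (F2 := fun _ => M)) ?sum_nat_const_nat; first by lia.
by move=> i hi; apply: h3.
Qed.

Lemma shape_mconf (s : nat -> nat) (M k q r : nat) : (2 <= M)%N -> (2 <= k)%N ->
  (forall i, s i <= M) -> (q < r)%N ->
  (forall i, (i < q)%N -> s i = 0%N) -> (forall i, (r < i)%N -> s i = 0%N) ->
  (forall i, (q < i < r)%N -> s i = M) -> (0 < s q)%N -> (0 < s r)%N ->
  (s q + s r + (r - q.+1) * M = k * M)%N ->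
  exists j, (1 <= j <= M)%N /\ forall i : nat, s i = mconf M k j (i%:Z - q%:Z)%R.
Proof.
move=> hM hk hle hqr h1 h2 h3 hq hr e.
have hsq := hle q; have hsr := hle r.
set w := (r - q.+1)%N in e.
have : (w.+1 = k /\ s q + s r = M)%N \/ (w.+2 = k /\ s q = M /\ s r = M)%N.
  have [hk1|hk1] := leqP k w.
    have : (k * M <= w * M)%N by rewrite leq_mul2r hk1 orbT. lia.
  have [hk2|hk2] := leqP (w.+3) k.
    have : (w.+3 * M <= k * M)%N by rewrite leq_mul2r hk2 orbT. rewrite !mulSn. lia.
  have [e1|e1] : (w.+1 = k \/ w.+2 = k)%N by lia.
    subst k. left. rewrite mulSn in e. lia.
  subst k. right. rewrite !mulSn in e. lia.
rewrite /w => -[[ew es]|[ew [es1 es2]]].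
- exists (s q); split; first by lia.
  move=> i; rewrite /mconf.
  case: (ltngtP i q) => hiq.
  + rewrite h1 //. 
    have -> : (i%:Z - q%:Z == 0)%R = false by apply/negbTE; lia.
    have -> : ((0 < i%:Z - q%:Z) && (i%:Z - q%:Z < k%:Z))%R = false by apply/negbTE; lia.
    have -> : (i%:Z - q%:Z == k%:Z)%R = false by apply/negbTE; lia.
    by [].
  + have -> : (i%:Z - q%:Z == 0)%R = false by apply/negbTE; lia.
    case: (ltngtP i r) => hir.
    * rewrite h3 ?hiq ?hir //.
      have -> : ((0 < i%:Z - q%:Z) && (i%:Z - q%:Z < k%:Z))%R = true by apply/andP; lia.
      by [].
    * rewrite h2 //.
      have -> : ((0 < i%:Z - q%:Z) && (i%:Z - q%:Z < k%:Z))%R = false by apply/negbTE; lia.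
      have -> : (i%:Z - q%:Z == k%:Z)%R = false by apply/negbTE; lia.
      by [].
    * subst i.
      have -> : ((0 < r%:Z - q%:Z) && (r%:Z - q%:Z < k%:Z))%R = false by apply/negbTE; lia.
      have -> : (r%:Z - q%:Z == k%:Z)%R = true by apply/eqP; lia.
      lia.
  + subst i.
    have -> : (q%:Z - q%:Z == 0)%R = true by apply/eqP; lia.
    by [].
- exists M; split; first by lia.
  move=> i; rewrite /mconf.
  case: (ltngtP i q) => hiq.
  + rewrite h1 //. 
    have -> : (i%:Z - q%:Z == 0)%R = false by apply/negbTE; lia.
    have -> : ((0 < i%:Z - q%:Z) && (i%:Z - q%:Z < k%:Z))%R = false by apply/negbTE; lia.
    have -> : (i%:Z - q%:Z == k%:Z)%R = false by apply/negbTE; lia.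
    by [].
  + have -> : (i%:Z - q%:Z == 0)%R = false by apply/negbTE; lia.
    case: (ltngtP i r) => hir.
    * rewrite h3 ?hiq ?hir //.
      have -> : ((0 < i%:Z - q%:Z) && (i%:Z - q%:Z < k%:Z))%R = true by apply/andP; lia.
      by [].
    * rewrite h2 //.
      have -> : ((0 < i%:Z - q%:Z) && (i%:Z - q%:Z < k%:Z))%R = false by apply/negbTE; lia.
      case: (i%:Z - q%:Z == k%:Z)%R; lia.
    * subst i.
      have -> : ((0 < r%:Z - q%:Z) && (r%:Z - q%:Z < k%:Z))%R = true by apply/andP; lia.
      lia.
  + subst i.
    have -> : (q%:Z - q%:Z == 0)%R = true by apply/eqP; lia.
    lia.
Qed.

Local Open Scope ring_scope.

Lemma win_ext (f : int -> rat) (c : int) (d L e : nat) :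
  (forall x, f x != 0 -> (c + d%:Z <= x) && (x < c + (d + L)%:Z)) ->
  \sum_(i < d + L + e) f (c + i%:Z) = \sum_(i < L) f (c + d%:Z + i%:Z).
Proof.
move=> hf; rewrite big_split_ord big_split_ord /=.
rewrite big1 ?add0r; last first.
  move=> i _; apply/eqP; apply/negPn/negP => /hf; have := ltn_ord i; rewrite /=; lia.
rewrite [X in _ + X]big1 ?addr0; last first.
  move=> i _; apply/eqP; apply/negPn/negP => /hf; have := ltn_ord i; rewrite /=; lia.
by apply: eq_bigr => i _ /=; rewrite PoszD addrA.
Qed.

Lemma zsum_win (f : int -> rat) (c : int) (L : nat) :
  (forall x, f x != 0 -> (c <= x) && (x < c + L%:Z)) ->
  zsum f = \sum_(i < L) f (c + i%:Z).
Proof.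
move=> hf; rewrite /zsum.
set n0 := epsilon _ _.
have Hv : vanishes_outside f n0.
  apply: (epsilon_spec (inhabits 0%N) (vanishes_outside f)).
  exists (`|c|%N + L)%N => x hx; apply/eqP; apply/negPn/negP => /hf; lia.
set B := (n0 + `|c| + L)%N.
have E1 : \sum_(i < (n0.*2).+1) f (i%:Z - n0%:Z) =
          \sum_(i < (B - n0) + (n0.*2).+1 + (B - n0)) f (- B%:Z + i%:Z).
  rewrite win_ext.
    by apply: eq_bigr => i _; congr f; lia.
  move=> x hx; have : ~~ (n0 < `|x|)%N by apply/negP => /Hv; apply/eqP.
  lia.
have E2 : \sum_(i < L) f (c + i%:Z) =
          \sum_(i < absz (c + B%:Z)%R + L + (B.*2.+1 - absz (c + B%:Z)%R - L)) f (- B%:Z + i%:Z).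
  rewrite win_ext.
    by apply: eq_bigr => i _; congr f; lia.
  move=> x /hf; lia.
rewrite E1 E2; suff -> : (B - n0 + (n0.*2).+1 + (B - n0) = absz (c + B%:Z)%R + L + (B.*2.+1 - absz (c + B%:Z)%R - L))%N by [].
lia.
Qed.

Lemma sum_shift (s : nat -> nat) (L : nat) : s 0%N = 0%N -> s L = 0%N ->
  (\sum_(i < L) s i.+1 = \sum_(i < L) s i)%N.
Proof.
move=> h0 hL.
have e1 := @big_ord_recl _ 0%N addn L (fun i : 'I_L.+1 => s i).
have e2 := @big_ord_recr _ 0%N addn L (fun i : 'I_L.+1 => s i).
rewrite /= h0 add0n in e1; rewrite /= hL addn0 in e2.
rewrite -e2 e1; apply: eq_bigr => i _; rewrite /bump /=; congr s; lia.
Qed.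

Lemma VN_form (M : nat) (m : int -> nat) (c : int) (L : nat) (s : nat -> nat) :
  (forall i : nat, s i = m (c + i%:Z)) ->
  (forall x, (x <= c) || (c + L%:Z <= x) -> m x = 0%N) ->
  zsum (fun x => (m x)%:R) = (\sum_(i < L) s i)%N%:R /\
  VN M m = (M * \sum_(i < L) s i)%N%:R - (\sum_(i < L) s i * s i.+1)%N%:R.
Proof.
move=> hs hm; split.
  rewrite (zsum_win _ c L) ?natr_sum; last first.
    move=> x; apply: contraR => hx; rewrite hm //; lia.
  by apply: eq_bigr => i _; rewrite hs.
rewrite /VN (zsum_win _ c (L.+1)); last first.
  move=> x; apply: contraR => hx; rewrite !hm //=; try lia.
  by rewrite /= !(addr0, mulr0, mul0r, subr0).
rewrite big_ord_recr /= !hm ?mulr0 ?mul0r ?subr0 ?add0r ?addr0 ?mulr0; try lia.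
have e1 : forall i : nat, m (c + i%:Z + 1) = s i.+1 by move=> i; rewrite hs; congr m; lia.
under eq_bigr => i _ do rewrite e1 -hs.
rewrite sumrB -mulr_sumr big_split /= -!natr_sum sum_shift; last 2 first.
- by rewrite hs hm //; lia.
- by rewrite hs hm //; lia.
rewrite natrM -mulr_natr; congr (_ - _).
  by field.
by rewrite natr_sum; apply: eq_bigr => i _; rewrite natrM.
Qed.

Lemma mconf_out (M k j : nat) (x : int) : (x < 0) || (k%:Z < x) -> mconf M k j x = 0%N.
Proof.
move=> hx; rewrite /mconf.
have -> : (x == 0) = false by apply/negbTE; lia.
have -> : ((0 < x) && (x < k%:Z)) = false by apply/negbTE; lia.
have -> : (x == k%:Z) = false by apply/negbTE; lia.
by [].
Qed.

Lemma mconf_le (M k j : nat) (x : int) : (j <= M)%N -> (mconf M k j x <= M)%N.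
Proof.
move=> hj; rewrite /mconf; case: ifP => // _; case: ifP => // _; case: ifP => // _; lia.
Qed.

Lemma mconf_sums (M k j : nat) : (2 <= k)%N -> (1 <= j <= M)%N ->
  let s := fun i : nat => mconf M k j (i%:Z - 1) in
  (\sum_(i < k.+2) s i = k * M)%N /\
  (M * \sum_(i < k.+2) s i = \sum_(i < k.+2) s i * s i.+1 + M ^ 2)%N.
Proof.
move=> hk hj s.
have s0 : s 0%N = 0%N by rewrite /s mconf_out.
have s1 : s 1%N = j by rewrite /s /mconf.
have sm : forall i, (2 <= i <= k)%N -> s i = M.
  move=> i hi; rewrite /s /mconf.
  have -> : (i%:Z - 1 == 0) = false by apply/negbTE; lia.
  have -> : ((0 < i%:Z - 1) && (i%:Z - 1 < k%:Z)) = true by apply/andP; lia.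
  by [].
have sk : s k.+1 = (M - j)%N.
  rewrite /s /mconf.
  have -> : (k.+1%:Z - 1 == 0) = false by apply/negbTE; lia.
  have -> : ((0 < k.+1%:Z - 1) && (k.+1%:Z - 1 < k%:Z)) = false by apply/negbTE; lia.
  have -> : (k.+1%:Z - 1 == k%:Z) = true by apply/eqP; lia.
  by [].
have sk2 : s k.+2 = 0%N by rewrite /s mconf_out //; lia.
have eN : (\sum_(i < k.+2) s i = k * M)%N.
  rewrite -(big_mkord xpredT) big_ltn // s0 add0n big_ltn // s1 big_nat_recr //=; last by lia.
  rewrite sk (eq_big_nat _ _ (F2 := fun _ => M)) ?sum_nat_const_nat; last first.
    by move=> i hi; apply: sm; lia.
  have -> : k = (k - 2).+2 by lia.
  rewrite !mulSn. lia.
split => //.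
rewrite eN -(big_mkord xpredT (fun i => s i * s i.+1)%N) big_ltn // s0 mul0n add0n big_ltn // s1 big_nat_recr //=; last by lia.
rewrite sk sk2 muln0 addn0 big_nat_recr /=; last by lia.
rewrite sk (sm k); last by lia.
rewrite (sm 2%N) //.
rewrite (eq_big_nat _ _ (F2 := fun _ => M * M)%N); last first.
  by move=> i hi; rewrite !sm //; lia.
rewrite sum_nat_const_nat.
move: (hj) => /andP [hj1 hj2].
have [d ->] : exists d, M = (j + d)%N by exists (M - j)%N; lia.
have [u ->] : exists u, k = (u + 2)%N by exists (k - 2)%N; lia.
rewrite (_ : (u + 2 - 2)%N = u); last by lia.
rewrite (_ : (j + d - j)%N = d); last by lia.
ring.
Qed.

Lemma transl_props (M k j : nat) (t : int) : (2 <= k)%N -> (1 <= j <= M)%N ->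
  inMN M (k * M) (translate (mconf M k j) t) /\
  VN M (translate (mconf M k j) t) = (M ^ 2)%:R.
Proof.
move=> hk hj.
have [eN eS] := @mconf_sums M k j hk hj.
set s := fun i : nat => mconf M k j (i%:Z - 1) in eN eS.
have [Z V] := @VN_form M (translate (mconf M k j) t) (t - 1) k.+2 s
   ltac:(by move=> i; rewrite /s /translate; congr mconf; lia)
   ltac:(by move=> x hx; rewrite /translate mconf_out //; lia).
split.
  split.
    exists (`|t|%N + k.+1)%N => x hx; rewrite /translate mconf_out //; lia.
  split; first by move=> x; rewrite /translate mconf_le //; lia.
  by rewrite Z eN.
by rewrite V eS natrD addrC addKr.
Qed.

Lemma setup (M N : nat) (m : int -> nat) : inMN M N m ->
  exists (c : int) (L : nat) (s : nat -> nat),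
   [/\ (forall i : nat, s i = m (c + i%:Z)),
       (forall x, (x <= c) || (c + L%:Z <= x) -> m x = 0%N),
       s 0%N = 0%N /\ (forall i, (L <= i)%N -> s i = 0%N),
       (\sum_(i < L) s i)%N = N /\ (forall i, s i <= M)%N &
       VN M m = (M * N)%N%:R - (\sum_(i < L) s i * s i.+1)%N%:R].
Proof.
move=> [[n hn] [hle hsum]].
set c := - (n%:Z + 1).
set s := fun i : nat => m (c + i%:Z).
have hout : forall x, (x <= c) || (c + (n.*2.+2)%:Z <= x) -> m x = 0%N.
  by move=> x hx; apply: hn; lia.
have [Z V] := @VN_form M m c (n.*2.+2) s (fun i => erefl) hout.
have eN : (\sum_(i < n.*2.+2) s i)%N = N.
  by apply/eqP; rewrite -(@eqr_nat rat) -Z hsum.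
exists c, (n.*2.+2), s; split => //.
- split; first by rewrite /s hout //; lia.
  by move=> i hi; rewrite /s hout //; lia.
- by split => // i; rewrite /s hle.
- by rewrite V eN.
Qed.

Lemma VN_lower (M k N : nat) (m : int -> nat) : (2 <= M)%N -> (2 <= k)%N -> N = (k * M)%N ->
  inMN M N m -> (M ^ 2)%:R <= VN M m.
Proof.
move=> hM hk hN hm.
have [c [L [s [hs hout [h0 hL] [eN hle] V]]]] := @setup M N m hm.
have [B _] := @seq_main s L M (ltnW hM) hle h0 hL ltac:(rewrite eN hN; rewrite leq_mul2r; lia).
rewrite eN in B.
rewrite V lerBrDr -natrD ler_nat; lia.
Qed.

Theorem mainTheorem6 (M k N : nat) (hM : (2 <= M)%N) (hk : (2 <= k)%N)
  (hN : N = (k * M)%N) :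
  (forall m : int -> nat,
     isMinimizer M N m <->
     exists (j : nat) (t : int), (1 <= j <= M)%N /\ m = translate (mconf M k j) t) /\
  (forall j : nat, (1 <= j <= M)%N -> VN M (mconf M k j) = (M ^ 2)%:R).
Proof.
have hM1 : (1 <= M)%N by lia.
split; last first.
  move=> j hj.
  have -> : mconf M k j = translate (mconf M k j) 0.
    by apply: functional_extensionality => x; rewrite /translate subr0.
  by case: (transl_props M k j 0 hk hj).
move=> m; split.
- move=> [hm hmin].
  have hV : VN M m <= (M ^ 2)%:R.
    have hj1 : (1 <= 1 <= M)%N by rewrite leqnn /=.
    have [I1 V1] := transl_props M k 1 0 hk hj1.
    rewrite -V1; apply: hmin; by rewrite hN.
  have [c [L [s [hs hout [h0 hL] [eN hle] V]]]] := @setup M N m hm.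
  have h2M : (2 * M <= \sum_(i < L) s i)%N by rewrite eN hN leq_mul2r hk orbT.
  have [B E] := @seq_main s L M hM1 hle h0 hL h2M.
  have heq : (\sum_(i<L) s i * s i.+1 + M * M = M * \sum_(i<L) s i)%N.
    apply/eqP; rewrite eqn_leq B /=.
    move: hV; rewrite V eN lerBlDr -natrD ler_nat. rewrite expnS expn1. by rewrite addnC.
  have [q [r [/andP [hq0 hqr] h1 h2 h3 /andP [hsq hsr]]]] := E heq.
  have hrL : (r < L)%N by case: (ltnP r L) => // /hL; lia.
  have esum := @shape_sum s L M q r hqr h1 h2 h3 hrL.
  have [j [hj hsj]] := @shape_mconf s M k q r hM hk hle hqr h1 h2 h3 hsq hsr ltac:(lia).
  exists j, (c + q%:Z); split => //.
  apply: functional_extensionality => x; rewrite /translate.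
  case: (lerP c x) => hcx.
    have -> : x = c + (absz (x - c))%:Z by lia.
    rewrite -hs hsj; congr mconf; lia.
  rewrite hout ?mconf_out //; lia.
- move=> [j [t [hj ->]]].
  have [I1 V1] := transl_props M k j t hk hj.
  split; first by rewrite hN.
  move=> m' hm'; rewrite V1; exact: (@VN_lower M k N m' hM hk hN hm').
Qed.
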